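(* Let $k\ge1$ and $0<a\le1$, and consider on $[0,+\infty)$ the function $$f_{a,k}(s):=\Big(1-\big(\tfrac{s}{a}\big)^{2k}\Big)^{2k}s+\Big(1-\Big(1-\big(\tfrac{s}{a}\big)^{2k}\Big)^{2k}\Big)\sqrt{s},$$ which is a semialgebraic function of class $C^{2k}$. Then: $f_{a,k}$ is non-negative and strictly increasing on $[0,a]$; the Taylor polynomial of $f_{a,k}$ of degree $2k$ at $s=0$ is $s$; the Taylor polynomials of degree $2k-1$ of $f_{a,k}$ and of $\sqrt{s}$ at $s=a$ coincide; and $f_{a,k}(s)\le\sqrt{s}$ for all $s\in[0,1]$. *)

(* Defs.v *)
From Stdlib Require Import Reals Lra Lia.
From Coquelicot Require Import Coquelicot.
Open Scope R_scope.

Definition f_ak (a : R) (k : nat) (s : R) : R :=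
  (1 - (s / a) ^ (2 * k)) ^ (2 * k) * s
  + (1 - (1 - (s / a) ^ (2 * k)) ^ (2 * k)) * sqrt s.

(* Derivative of g at x, relative to the domain [0,+oo)
   (one-sided at x = 0, ordinary at x > 0). *)
Definition is_derive_nonneg (g : R -> R) (x l : R) : Prop :=
  filterlim (fun h => (g (x + h) - g x) / h)
    (within (fun h => h <> 0 /\ 0 <= x + h) (locally 0)) (locally l).

Definition continuous_nonneg (g : R -> R) (x : R) : Prop :=
  filterlim g (within (fun y => 0 <= y) (locally x)) (locally (g x)).

(* Taylor polynomial of degree n at s0, given the family d of derivatives
   (d j = j-th derivative):  sum_{j=0}^n d j s0 / j! * (x - s0)^j. *)
Definition taylor_poly (d : nat -> R -> R) (n : nat) (s0 x : R) : R :=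
  sum_f_R0 (fun j => d j s0 / INR (Factorial.fact j) * (x - s0) ^ j) n.

(* Main.v *)
Require Import Defs.
From Stdlib Require Import Reals.
From Coquelicot Require Import Coquelicot.
Open Scope R_scope.

From Coquelicot Require Import Coquelicot.
From Stdlib Require Import Reals Lra Lia.
Open Scope R_scope.

Lemma ball_R x e y : ball x e y -> Rabs (y - x) < e.
Proof. intros Hz. cbv [ball] in Hz. simpl in Hz.
cbv [AbsRing_ball abs minus plus opp] in Hz. simpl in Hz. exact Hz. Qed.

Lemma R_ball x (e : posreal) y : Rabs (y - x) < e -> ball x e y.
Proof. intros Hz. cbv [ball]. simpl.
cbv [AbsRing_ball abs minus plus opp]. simpl. exact Hz. Qed.

Lemma loc_pos y : 0 < y -> locally y (fun z => 0 < z).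
Proof. intros H. exists (mkposreal y H). intros z Hz. apply ball_R in Hz.
apply Rabs_lt_between' in Hz. simpl in Hz. lra. Qed.

Lemma der_plus f g x df dg : is_derive f x df -> is_derive g x dg ->
  is_derive (fun y => f y + g y) x (df + dg).
Proof. intros. apply (is_derive_plus f g); auto. Qed.

Lemma der_mult f g x df dg : is_derive f x df -> is_derive g x dg ->
  is_derive (fun y => f y * g y) x (df * g x + f x * dg).
Proof. intros. apply (is_derive_mult f g); auto. intros; apply Rmult_comm. Qed.

Lemma der_comp f g x df dg : is_derive f (g x) df -> is_derive g x dg ->
  is_derive (fun y => f (g y)) x (dg * df).
Proof. intros. apply (is_derive_comp f g); auto. Qed.

Lemma der_const c x : is_derive (fun _ => c) x 0.
Proof. apply (is_derive_const c x). Qed.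

Lemma der_id x : is_derive (fun y => y) x 1.
Proof. apply (is_derive_id x). Qed.

Lemma der_sqrt x : 0 < x -> is_derive sqrt x (/ (2 * sqrt x)).
Proof. intros H. assert (Hd := is_derive_sqrt (fun y => y) x 1 (der_id x) H).
 replace (/ (2 * sqrt x)) with (1 / (2 * sqrt x)) by (unfold Rdiv; ring). exact Hd. Qed.

Lemma der_pow f n x l : is_derive f x l -> is_derive (fun y => f y ^ n) x (INR n * l * f x ^ Init.Nat.pred n).
Proof. apply is_derive_pow. Qed.

Lemma cont_eps f x : continuous f x -> forall eps, 0 < eps -> exists d, 0 < d /\
  forall y, Rabs (y - x) < d -> Rabs (f y - f x) < eps.
Proof. intros H eps He. destruct (H (ball (f x) (mkposreal eps He)) (locally_ball _ _)) as [d Hd].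
 exists d. split. apply cond_pos. intros y Hy. apply (ball_R (f x) (mkposreal eps He)).
 apply Hd. apply R_ball. exact Hy. Qed.

Inductive tp := TC (c : R) | TT | TAdd (p q : tp) | TMul (p q : tp).
Fixpoint ev (p : tp) (t : R) : R := match p with
 | TC c => c | TT => t | TAdd p q => ev p t + ev q t | TMul p q => ev p t * ev q t end.
Fixpoint tder (p : tp) : tp := match p with
 | TC _ => TC 0 | TT => TC 1 | TAdd p q => TAdd (tder p) (tder q)
 | TMul p q => TAdd (TMul (tder p) q) (TMul p (tder q)) end.

Lemma ev_der p t : is_derive (ev p) t (ev (tder p) t).
Proof. induction p; simpl.
 - apply der_const.
 - apply der_id.
 - apply der_plus; auto.
 - apply der_mult; auto. Qed.

Lemma ev_cont p t : continuous (ev p) t.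
Proof. apply (@ex_derive_continuous R_AbsRing R_NormedModule). eexists. apply ev_der. Qed.

Definition IsTP (F : R -> R) := exists p, forall t, F t = ev p t.
Lemma IsTP_const c : IsTP (fun _ => c). Proof. exists (TC c); reflexivity. Qed.
Lemma IsTP_id : IsTP (fun t => t). Proof. exists TT; reflexivity. Qed.
Lemma IsTP_add F G : IsTP F -> IsTP G -> IsTP (fun t => F t + G t).
Proof. intros [p Hp] [q Hq]; exists (TAdd p q); intros; simpl; rewrite Hp, Hq; auto. Qed.
Lemma IsTP_mul F G : IsTP F -> IsTP G -> IsTP (fun t => F t * G t).
Proof. intros [p Hp] [q Hq]; exists (TMul p q); intros; simpl; rewrite Hp, Hq; auto. Qed.
Lemma IsTP_sub F G : IsTP F -> IsTP G -> IsTP (fun t => F t - G t).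
Proof. intros HF HG. destruct (IsTP_add _ _ HF (IsTP_mul _ _ (IsTP_const (-1)) HG)) as [p Hp].
 exists p; intros; rewrite <- Hp; ring. Qed.
Lemma IsTP_pow F n : IsTP F -> IsTP (fun t => F t ^ n).
Proof. intros HF. induction n; simpl. apply IsTP_const. apply IsTP_mul; auto. Qed.
Lemma IsTP_sum (F : nat -> R -> R) N : (forall i, IsTP (F i)) -> IsTP (fun t => sum_f_R0 (fun i => F i t) N).
Proof. intros H. induction N; simpl. apply H. apply IsTP_add; auto. Qed.


Lemma nn_of_eps g x l : (forall eps, 0 < eps -> exists delta, 0 < delta /\
  forall h, h <> 0 -> 0 <= x + h -> Rabs h < delta -> Rabs ((g (x + h) - g x) / h - l) < eps) ->
  is_derive_nonneg g x l.
Proof. intros H P [eps HP]. destruct (H eps (cond_pos eps)) as [d [Hd Hh]].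
 exists (mkposreal d Hd). intros h Hb [Hh0 Hx]. apply HP. apply R_ball.
 apply Hh; auto. apply ball_R in Hb. simpl in Hb. rewrite Rminus_0_r in Hb. exact Hb. Qed.

Lemma nn_of_derive g x l : is_derive g x l -> is_derive_nonneg g x l.
Proof. intros H. apply is_derive_Reals in H. apply nn_of_eps. intros eps He.
 destruct (H eps He) as [d Hd]. exists d. split. apply cond_pos. intros h H0 _ Hh. apply Hd; auto. Qed.

Lemma nn_plus f g x l1 l2 : is_derive_nonneg f x l1 -> is_derive_nonneg g x l2 ->
  is_derive_nonneg (fun y => f y + g y) x (l1 + l2).
Proof. intros H1 H2. unfold is_derive_nonneg in *.
 apply filterlim_ext with (f := fun h => (f (x + h) - f x) / h + (g (x + h) - g x) / h).
 intros h. unfold Rdiv. ring.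
 apply filterlim_comp_2 with (h := Rplus) (1 := H1) (2 := H2).
 exact (filterlim_plus l1 l2). Qed.

Lemma nn_ext f g x l : (forall y, 0 <= y -> f y = g y) -> 0 <= x ->
  is_derive_nonneg f x l -> is_derive_nonneg g x l.
Proof. intros He Hx H. unfold is_derive_nonneg in *.
 apply filterlim_within_ext with (2 := H). intros h [_ Hh]. rewrite !He; auto. Qed.

Lemma cn_of_cont g x : continuous g x -> continuous_nonneg g x.
Proof. intros H P HP. apply H in HP. unfold within, filtermap in *.
 apply (filter_imp (fun y => P (g y))). intros y Hy _; exact Hy. exact HP. Qed.


Definition Pfun (P : nat * tp) x := sqrt x ^ fst P * ev (snd P) (sqrt x).
Definition PD (P : nat * tp) : nat * tp :=
  ((fst P - 2)%nat, TAdd (TMul (TC (INR (fst P) / 2)) (snd P)) (TMul (TMul (TC (1/2)) TT) (tder (snd P)))).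

Lemma der_val (f : R -> R) (x l1 l2 : R) : l1 = l2 -> is_derive f x l1 -> is_derive f x l2.
Proof. intros ->; auto. Qed.

Lemma Pfun_der P x : (2 <= fst P)%nat -> 0 < x -> is_derive (Pfun P) x (Pfun (PD P) x).
Proof. destruct P as [m W]; simpl. intros Hm Hx. destruct m as [|[|m']]; try lia.
 assert (H1 := der_comp (fun t => t ^ S (S m') * ev W t) sqrt x _ _
   (der_mult _ _ _ _ _ (der_pow _ (S (S m')) _ _ (der_id (sqrt x))) (ev_der W (sqrt x))) (der_sqrt x Hx)).
 unfold Pfun; simpl. eapply der_val; [|exact H1]. simpl.
 assert (Hs : 0 < sqrt x) by (apply sqrt_lt_R0; auto).
 replace (m' - 0)%nat with m' by lia.
 field. lra. Qed.

Lemma sqrt_pos_lt h : 0 < h -> 0 < sqrt h. Proof. apply sqrt_lt_R0. Qed.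

Lemma Pfun_der0 P : (2 <= fst P)%nat -> is_derive_nonneg (Pfun P) 0 (Pfun (PD P) 0).
Proof. destruct P as [m W]; simpl. intros Hm. destruct m as [|[|m']]; try lia.
 set (G := fun t => t ^ m' * ev W t).
 assert (HG : continuous G 0).
 { apply (@ex_derive_continuous R_AbsRing R_NormedModule). eexists.
   apply der_mult. apply der_pow. apply der_id. apply ev_der. }
 apply nn_of_eps. intros eps He. destruct (cont_eps G 0 HG eps He) as [d1 [Hd1 Hc]].
 exists (d1 * d1). split. nra. intros h Hh0 Hh Hhd. rewrite Rplus_0_l in Hh.
 assert (Hp : 0 < h) by lra. rewrite Rabs_right in Hhd by lra.
 assert (Hs : sqrt h < d1).
 { rewrite <- (sqrt_square d1) by lra. apply sqrt_lt_1; lra. }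
 assert (Hs0 := sqrt_pos_lt h Hp).
 unfold Pfun; simpl. rewrite Rplus_0_l, sqrt_0.
 replace ((sqrt h * (sqrt h * sqrt h ^ m') * ev W (sqrt h) - 0 * (0 * 0 ^ m') * ev W 0) / h)
   with (G (sqrt h)).
 2:{ unfold G, Rdiv. replace (/ h) with (/ (sqrt h * sqrt h)) by (rewrite sqrt_sqrt; lra). field. lra. }
 replace (m' - 0)%nat with m' by lia.
 match goal with |- Rabs (_ - ?L) < _ => replace L with (G 0) end.
 2:{ unfold G. destruct m'. simpl. field. simpl. ring. }
 specialize (Hc (sqrt h)). rewrite Rminus_0_r in Hc. apply Hc. rewrite Rabs_right; lra. Qed.


Definition xpart (j : nat) (x : R) : R := match j with 0%nat => x | 1%nat => 1 | _ => 0 end.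
Fixpoint iterPD (j : nat) (P : nat * tp) : nat * tp := match j with 0%nat => P | S j => PD (iterPD j P) end.
Lemma fst_iterPD j P : fst (iterPD j P) = (fst P - 2 * j)%nat.
Proof. induction j; simpl. lia. rewrite IHj. lia. Qed.
Definition E P0 j x := xpart j x + Pfun (iterPD j P0) x.

Lemma xpart_der j x : is_derive (xpart j) x (xpart (S j) x).
Proof. destruct j as [|[|j]]; unfold xpart. apply der_id. apply der_const. apply der_const. Qed.

Lemma E_der P0 j x : (2 <= fst (iterPD j P0))%nat -> 0 < x -> is_derive (E P0 j) x (E P0 (S j) x).
Proof. intros. unfold E. apply der_plus. apply xpart_der. simpl. apply Pfun_der; auto. Qed.

Lemma E_dnn P0 j x : (2 <= fst (iterPD j P0))%nat -> 0 <= x -> is_derive_nonneg (E P0 j) x (E P0 (S j) x).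
Proof. intros H Hx. destruct (Rle_lt_or_eq_dec 0 x Hx) as [Hp|H0].
 - apply nn_of_derive, E_der; auto.
 - subst x. unfold E. apply nn_plus. apply nn_of_derive, xpart_der. simpl. apply Pfun_der0; auto. Qed.

Lemma E_cont P0 j x : continuous (E P0 j) x.
Proof. unfold E. apply (@continuous_plus R_UniformSpace R_AbsRing R_NormedModule).
 - destruct j as [|[|j]]; unfold xpart. apply continuous_id. apply continuous_const. apply continuous_const.
 - unfold Pfun. apply (@continuous_mult R_UniformSpace R_AbsRing (fun x => sqrt x ^ _) (fun x => ev _ (sqrt x))).
   apply (continuous_comp sqrt (fun t => t ^ _)). apply continuous_sqrt.
   apply (@ex_derive_continuous R_AbsRing R_NormedModule). eexists. apply der_pow. apply der_id.
   apply (continuous_comp sqrt (ev _)). apply continuous_sqrt. apply ev_cont. Qed.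

Lemma W_exists (a : R) (k : nat) : 0 < a -> (1 <= k)%nat -> exists W, forall x, 0 <= x ->
  f_ak a k x = x + sqrt x ^ (4 * k + 1) * ev W (sqrt x).
Proof. intros Ha Hk. set (n := (2 * k)%nat).
 set (Wf := fun t => / a ^ n * sum_f_R0 (fun i => (1 - (t * t / a) ^ n) ^ i) (n - 1) * (1 - t)).
 assert (HW : IsTP Wf).
 { unfold Wf. apply IsTP_mul. apply IsTP_mul. apply IsTP_const.
   apply (IsTP_sum (fun i t => (1 - (t * t / a) ^ n) ^ i)). intros i. apply IsTP_pow. apply IsTP_sub.
   apply IsTP_const. apply IsTP_pow. unfold Rdiv. apply IsTP_mul. apply IsTP_mul; apply IsTP_id. apply IsTP_const.
   apply IsTP_sub. apply IsTP_const. apply IsTP_id. }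
 destruct HW as [W HW]. exists W. intros x Hx. rewrite <- HW.
 assert (Ht : x = sqrt x * sqrt x) by (rewrite sqrt_sqrt; auto).
 remember (sqrt x) as t eqn:Et. unfold f_ak. rewrite <- Et. fold n. rewrite Ht.
 unfold Wf. set (u := (t * t / a) ^ n). set (r := 1 - u).
 set (Sg := sum_f_R0 (fun i => r ^ i) (n - 1)).
 assert (HS : Sg * (r - 1) = r ^ n - 1).
 { unfold Sg. rewrite GP_finite. replace (n - 1 + 1)%nat with n by lia. ring. }
 assert (Hu : t ^ (4 * k + 1) * / a ^ n = t * u).
 { unfold u, n. unfold Rdiv. rewrite Rpow_mult_distr, pow_inv.
   replace (4 * k + 1)%nat with (S (2 * (2 * k)))%nat by lia. rewrite <- tech_pow_Rmult, (pow_mult t 2). replace (t ^ 2) with (t * t) by ring. ring. }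
 replace (t ^ (4 * k + 1) * (/ a ^ n * Sg * (1 - t))) with ((t ^ (4 * k + 1) * / a ^ n) * Sg * (1 - t)) by ring.
 rewrite Hu. replace u with (1 - r) by (unfold r; ring).
 replace (t * (1 - r) * Sg * (1 - t)) with (- (t * (1 - t)) * (Sg * (r - 1))) by ring. rewrite HS.
 unfold r. ring. Qed.


Inductive Lp : (R -> R) -> Prop :=
| Lp_const c : Lp (fun _ => c)
| Lp_id : Lp (fun x => x)
| Lp_sqrt : Lp sqrt
| Lp_isqrt : Lp (fun x => / sqrt x)
| Lp_plus F G : Lp F -> Lp G -> Lp (fun x => F x + G x)
| Lp_mult F G : Lp F -> Lp G -> Lp (fun x => F x * G x)
| Lp_ext F G : Lp F -> (forall x, 0 < x -> F x = G x) -> Lp G.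

Lemma Lp_minus F G : Lp F -> Lp G -> Lp (fun x => F x - G x).
Proof. intros. apply (Lp_ext (fun x => F x + (fun _ => -1) x * G x)).
 apply Lp_plus; auto. apply Lp_mult; auto. apply Lp_const. intros; ring. Qed.
Lemma Lp_pow F n : Lp F -> Lp (fun x => F x ^ n).
Proof. intros. induction n; simpl. apply Lp_const. apply (Lp_mult F (fun x => F x ^ n)); auto. Qed.
Lemma Lp_div F c : Lp F -> Lp (fun x => F x / c).
Proof. intros. exact (Lp_mult F (fun _ => / c) H (Lp_const _)). Qed.

Lemma Lp_deriv F : Lp F -> exists F', Lp F' /\ forall x, 0 < x -> is_derive F x (F' x).
Proof. induction 1.
 - exists (fun _ => 0). split. apply Lp_const. intros; apply der_const.
 - exists (fun _ => 1). split. apply Lp_const. intros; apply der_id.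
 - exists (fun x => / 2 * / sqrt x). split. apply (Lp_mult (fun _ => /2) (fun x => / sqrt x)).
   apply Lp_const. apply Lp_isqrt. intros x Hx. eapply der_val; [|apply der_sqrt; auto].
   assert (0 < sqrt x) by (apply sqrt_lt_R0; auto). field. lra.
 - exists (fun x => - / 2 * (/ sqrt x * (/ sqrt x * / sqrt x))). split.
   apply (Lp_mult (fun _ => - / 2) (fun x => (/ sqrt x * (/ sqrt x * / sqrt x)))). apply Lp_const.
   apply (Lp_mult (fun x => / sqrt x) (fun x => (/ sqrt x * / sqrt x))). apply Lp_isqrt.
   apply (Lp_mult (fun x => / sqrt x) (fun x => / sqrt x)); apply Lp_isqrt.
   intros x Hx. assert (0 < sqrt x) by (apply sqrt_lt_R0; auto).
   eapply der_val; [|apply (is_derive_inv sqrt); [apply der_sqrt; auto| lra]].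
   field. lra.
 - destruct IHLp1 as [F' [H1 H2]], IHLp2 as [G' [H3 H4]].
   exists (fun x => F' x + G' x). split. apply Lp_plus; auto. intros; apply der_plus; auto.
 - destruct IHLp1 as [F' [H1 H2]], IHLp2 as [G' [H3 H4]].
   exists (fun x => F' x * G x + F x * G' x). split.
   apply Lp_plus; apply Lp_mult; auto. intros; apply der_mult; auto.
 - destruct IHLp as [F' [H1 H2]]. exists F'. split; auto. intros x Hx.
   apply (is_derive_ext_loc F). apply (filter_imp (fun y => 0 < y)). intros; auto.
   apply loc_pos; auto. apply H2; auto. Qed.

Lemma Lp_Derive_n F : Lp F -> forall n, exists G, Lp G /\ forall x, 0 < x -> Derive_n F n x = G x.
Proof. intros HF n. induction n.
 - exists F. split; auto.
 - destruct IHn as [G [HG HGe]]. destruct (Lp_deriv G HG) as [G' [HG' HG'd]].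
   exists G'. split; auto. intros x Hx. simpl.
   rewrite (Derive_ext_loc _ G). apply is_derive_unique, HG'd; auto.
   apply (filter_imp (fun y => 0 < y)). intros; auto. apply loc_pos; auto. Qed.

Lemma Lp_ex_derive_n F : Lp F -> forall n x, 0 < x -> ex_derive_n F n x.
Proof. intros HF n x Hx. destruct n. simpl; auto. simpl.
 destruct (Lp_Derive_n F HF n) as [G [HG HGe]]. destruct (Lp_deriv G HG) as [G' [HG' HG'd]].
 apply (ex_derive_ext_loc G). apply (filter_imp (fun y => 0 < y)). intros; symmetry; auto.
 apply loc_pos; auto. eexists; apply HG'd; auto. Qed.

Lemma vanish h a : Lp h -> h a = 0 -> 0 < a -> forall j r w, Lp w -> (j < r)%nat ->
  Derive_n (fun x => h x ^ r * w x) j a = 0.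
Proof. intros Hh Ha0 Ha j. induction j; intros r w Hw Hr.
 - simpl. rewrite Ha0. destruct r; [lia|simpl; ring].
 - destruct r as [|r]; [lia|].
   destruct (Lp_deriv h Hh) as [h' [Hh' Hh'd]]. destruct (Lp_deriv w Hw) as [w' [Hw' Hw'd]].
   replace (S j) with (j + 1)%nat by lia. rewrite <- Derive_n_comp.
   rewrite (Derive_n_ext_loc _ (fun y => h y ^ r * (INR (S r) * h' y * w y + h y * w' y))).
   apply IHj. apply Lp_plus; apply Lp_mult; auto. apply Lp_mult; auto. apply Lp_const. lia.
   apply (filter_imp (fun y => 0 < y)). 2: apply loc_pos; auto.
   intros y Hy. change (Derive (fun x => h x ^ S r * w x) y = h y ^ r * (INR (S r) * h' y * w y + h y * w' y)). apply is_derive_unique.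
   eapply der_val; [|apply der_mult; [apply der_pow; apply Hh'd; auto| apply Hw'd; auto]].
   change (Init.Nat.pred (S r)) with r. cbv beta. rewrite <- tech_pow_Rmult. ring. Qed.

Lemma f_Lp a k : Lp (f_ak a k).
Proof. unfold f_ak. apply Lp_plus; apply Lp_mult.
 apply Lp_pow, Lp_minus. apply Lp_const. apply Lp_pow, Lp_div, Lp_id. apply Lp_id.
 apply Lp_minus. apply Lp_const. apply Lp_pow, Lp_minus. apply Lp_const. apply Lp_pow, Lp_div, Lp_id.
 apply Lp_sqrt. Qed.


Lemma sum_single (g : nat -> R) n v : (1 <= n)%nat -> g 1%nat = v ->
  (forall j, j <> 1%nat -> (j <= n)%nat -> g j = 0) -> sum_f_R0 g n = v.
Proof. intros Hn H1 H0. induction n. lia. destruct n.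
 simpl. rewrite H0, H1 by lia. ring.
 rewrite tech5. rewrite IHn; [| lia | intros; apply H0; lia]. rewrite H0 by lia. ring. Qed.

Lemma divle1 s a : 0 < a -> s <= a -> s / a <= 1.
Proof. intros. apply Rmult_le_reg_r with a; [lra|]. unfold Rdiv. rewrite Rmult_assoc, Rinv_l; lra. Qed.
Lemma divge0 s a : 0 < a -> 0 <= s -> 0 <= s / a.
Proof. intros. unfold Rdiv. apply Rmult_le_pos; auto. left; apply Rinv_0_lt_compat; auto. Qed.

Lemma pow01 x n : 0 <= x <= 1 -> 0 <= x ^ n <= 1.
Proof. intros. split. apply pow_le; lra. rewrite <- (pow1 n). apply pow_incr; lra. Qed.

Lemma sqrt_ge s : 0 <= s <= 1 -> s <= sqrt s.
Proof. intros H. assert (sqrt s <= 1) by (rewrite <- sqrt_1; apply sqrt_le_1; lra).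
 assert (0 <= sqrt s) by apply sqrt_pos. rewrite <- (sqrt_sqrt s) at 1 by lra. nra. Qed.

Lemma f_nonneg a k s : 0 < a -> a <= 1 -> 0 <= s <= a -> 0 <= f_ak a k s.
Proof. intros. unfold f_ak. set (n := (2 * k)%nat).
 assert (Hu := pow01 (s / a) n (conj (divge0 s a H (proj1 H1)) (divle1 s a H (proj2 H1)))).
 assert (Hq := pow01 (1 - (s / a) ^ n) n ltac:(lra)).
 assert (0 <= sqrt s) by apply sqrt_pos. apply Rplus_le_le_0_compat; apply Rmult_le_pos; lra. Qed.

Lemma f_mono a k s t : 0 < a -> a <= 1 -> 0 <= s -> s < t -> t <= a -> f_ak a k s < f_ak a k t.
Proof. intros. unfold f_ak. set (n := (2 * k)%nat).
 assert (Hus := pow01 (s / a) n (conj (divge0 s a H H1) (divle1 s a H ltac:(lra)))).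
 assert (Hut := pow01 (t / a) n (conj (divge0 t a H ltac:(lra)) (divle1 t a H ltac:(lra)))).
 assert (Hst : (s / a) ^ n <= (t / a) ^ n).
 { apply pow_incr. split. apply divge0; auto. unfold Rdiv. apply Rmult_le_compat_r. left; apply Rinv_0_lt_compat; auto. lra. }
 set (qs := (1 - (s / a) ^ n) ^ n). set (qt := (1 - (t / a) ^ n) ^ n).
 assert (Hqs := pow01 (1 - (s / a) ^ n) n ltac:(lra)). fold qs in Hqs.
 assert (Hqt := pow01 (1 - (t / a) ^ n) n ltac:(lra)). fold qt in Hqt.
 assert (Hq : qt <= qs). { apply pow_incr. lra. }
 assert (Hs : sqrt s < sqrt t) by (apply sqrt_lt_1; lra).
 assert (Ht : t <= sqrt t) by (apply sqrt_ge; lra).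
 assert (H4 : qs * t + (1 - qs) * sqrt t <= qt * t + (1 - qt) * sqrt t) by nra.
 assert (H5 : qs * s + (1 - qs) * sqrt s < qs * t + (1 - qs) * sqrt t).
 { destruct (Rle_lt_dec qs (1/2)); nra. }
 lra. Qed.

Lemma f_le_sqrt a k s : 0 <= s <= 1 -> f_ak a k s <= sqrt s.
Proof. intros. unfold f_ak. set (n := (2 * k)%nat).
 assert (Hq : 0 <= (1 - (s / a) ^ n) ^ n).
 { unfold n. rewrite pow_mult. apply pow_le. apply pow2_ge_0. }
 assert (s <= sqrt s) by (apply sqrt_ge; auto). nra. Qed.


Theorem lemma3p1 (k : nat) (a : R) (hk : (1 <= k)%nat) (ha0 : 0 < a) (ha1 : a <= 1) :
  (forall s, 0 <= s <= a -> 0 <= f_ak a k s) /\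
  (forall s t, 0 <= s -> s < t -> t <= a -> f_ak a k s < f_ak a k t) /\
  (exists d : nat -> R -> R,
     d O = f_ak a k /\
     (forall j x, (j < 2 * k)%nat -> 0 <= x -> is_derive_nonneg (d j) x (d (S j) x)) /\
     (forall x, 0 <= x -> continuous_nonneg (d (2 * k)%nat) x) /\
     (forall x, taylor_poly d (2 * k) 0 x = x) /\
     (forall x, taylor_poly d (2 * k - 1) a x
                = taylor_poly (fun j => Derive_n sqrt j) (2 * k - 1) a x)) /\
  (forall s, 0 <= s <= 1 -> f_ak a k s <= sqrt s).
Proof.
 split. intros; apply f_nonneg; auto.
 split. intros; apply f_mono; auto.
 split; [| intros; apply f_le_sqrt; auto].
 destruct (W_exists a k ha0 hk) as [W HW].
 set (P0 := ((4 * k + 1)%nat, W)).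
 set (d := fun j => match j with 0%nat => f_ak a k | S j' => E P0 (S j') end).
 assert (HE0 : forall x, 0 <= x -> E P0 0 x = f_ak a k x).
 { intros x Hx. rewrite HW by auto. reflexivity. }
 assert (Hm : forall j, (j < 2 * k)%nat -> (2 <= fst (iterPD j P0))%nat).
 { intros j Hj. rewrite fst_iterPD. simpl. lia. }
 assert (Hdn : forall j x, (j < 2 * k)%nat -> 0 <= x -> is_derive_nonneg (d j) x (d (S j) x)).
 { intros j x Hj Hx. destruct j as [|j].
   - apply (nn_ext (E P0 0)); auto. apply E_dnn; auto.
   - apply E_dnn; auto. }
 assert (Hd : forall j x, (j < 2 * k)%nat -> 0 < x -> is_derive (d j) x (d (S j) x)).
 { intros j x Hj Hx. destruct j as [|j].
   - apply (is_derive_ext_loc (E P0 0)). apply (filter_imp (fun y => 0 < y)).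
     intros; apply HE0; lra. apply loc_pos; auto. apply E_der; auto.
   - apply E_der; auto. }
 assert (HDn : forall j y, (j <= 2 * k)%nat -> 0 < y -> Derive_n (f_ak a k) j y = d j y).
 { induction j; intros y Hj Hy. reflexivity.
   simpl. rewrite (Derive_ext_loc _ (d j)). apply is_derive_unique, Hd; auto.
   apply (filter_imp (fun y => 0 < y)). intros; apply IHj; auto; lia. apply loc_pos; auto. }
 assert (Hsq : forall j, (j < 2 * k)%nat -> Derive_n (f_ak a k) j a = Derive_n sqrt j a).
 { intros j Hj.
   assert (Hz : Derive_n (fun x => f_ak a k x - sqrt x) j a = 0).
   { rewrite (Derive_n_ext _ (fun x => (fun x => 1 - (x / a) ^ (2 * k)) x ^ (2 * k) * (fun x => x - sqrt x) x)).
     apply vanish; auto. apply Lp_minus. apply Lp_const. apply Lp_pow, Lp_div, Lp_id.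
     unfold Rdiv. rewrite Rinv_r by lra. rewrite pow1. ring.
     apply Lp_minus. apply Lp_id. apply Lp_sqrt.
     intros x. unfold f_ak. ring. }
   rewrite Derive_n_minus in Hz. lra.
   apply (filter_imp (fun y => 0 < y)). intros; apply Lp_ex_derive_n; auto. apply f_Lp. apply loc_pos; auto.
   apply (filter_imp (fun y => 0 < y)). intros; apply Lp_ex_derive_n; auto. apply Lp_sqrt. apply loc_pos; auto. }
 exists d. split. reflexivity. split. exact Hdn. split.
 - intros x Hx. assert (E2 : d (2 * k)%nat = E P0 (2 * k)).
   { destruct k. lia. reflexivity. }
   rewrite E2. apply cn_of_cont, E_cont.
 - split.
   + intros x. unfold taylor_poly. apply sum_single. lia.
     * change (d 1%nat) with (E P0 1). unfold E, xpart, Pfun. rewrite sqrt_0, fst_iterPD.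
       simpl fst. rewrite pow_i by lia. simpl. field.
     * intros j Hj1 Hj. destruct j as [|j].
       simpl. unfold f_ak. unfold Rdiv. rewrite Rmult_0_l, pow_i by lia. rewrite sqrt_0. ring.
       change (d (S j)) with (E P0 (S j)). unfold E, Pfun. rewrite sqrt_0.
       rewrite fst_iterPD. simpl fst. rewrite pow_i by lia.
       destruct j as [|j]. lia. unfold xpart, Rdiv. ring.
   + intros x. unfold taylor_poly. apply sum_eq. intros j Hj.
     rewrite <- HDn; [| lia | lra]. rewrite Hsq by lia. reflexivity.
Qed.
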